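(* Let $R$ be a commutative ring. The following are equivalent: (i) $R$ is a p.p. ring; (ii) $R$ is a p.f. ring and $T(R)$ is an absolutely flat ring; (iii) $T(R)$ is an absolutely flat ring and the idempotents of $R$ can be lifted along each localization of $R$, i.e. for every multiplicative subset $S\subseteq R$ and every idempotent $x\in S^{-1}R$ there is an idempotent $e\in R$ with $e/1=x$; (iv) $T(R)$ is an absolutely flat ring and for every idempotent $x\in T(R)$ there is an idempotent $e\in R$ with $e/1=x$.
   Context: All rings are commutative with identity. A ring $R$ is a p.p. ring if every principal ideal of $R$ is a projective $R$-module; it is a p.f. ring if every principal ideal of $R$ is a flat $R$-module. $Z(R)=\{f\in R:\operatorname{Ann}(f)\neq 0\}$ is the set of zero-divisors and $T(R)=S^{-1}R$ with $S=R\setminus Z(R)$ is the total ring of fractions. A ring is absolutely flat if every module over it is flat (equivalently, von Neumann regular). *)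

(* Defs.v *)
From HB Require Import structures.
From mathcomp Require Import all_boot all_order all_algebra.

Set Implicit Arguments.
Unset Strict Implicit.
Unset Printing Implicit Defensive.

Import GRing.Theory.
Local Open Scope ring_scope.

(* Commutative rings with identity (the zero ring is allowed): comPzRingType.
   Subsets of R (ideals, multiplicative subsets) are Prop-valued predicates. *)

Section Defs.
Variable R : comPzRingType.

Definition principal_ideal (f : R) : R -> Prop := fun x => exists r : R, x = r * f.

Definition is_linear_map (M N : lmodType R) (g : M -> N) : Prop :=
  forall (r : R) (x y : M), g (r *: x + y) = r *: g x + g y.

(* A map h : R -> N whose restriction to the submodule I of R is R-linear;
   this represents an element of Hom_R(I, N). *)
Definition lin_on (N : lmodType R) (I : R -> Prop) (h : R -> N) : Prop :=
  forall (r x y : R), I x -> I y -> h (r * x + y) = r *: h x + h y.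

Definition projective_ideal (I : R -> Prop) : Prop :=
  forall (M N : lmodType R) (g : M -> N), is_linear_map g ->
    (forall n : N, exists m : M, g m = n) ->
  forall h : R -> N, lin_on I h ->
    exists k : R -> M, lin_on I k /\ (forall x, I x -> g (k x) = h x).

Definition bilin_on (I : R -> Prop) (M P : lmodType R) (b : R -> M -> P) : Prop :=
  (forall (r x y : R) (m : M), I x -> I y -> b (r * x + y) m = r *: b x m + b y m) /\
  (forall (r x : R) (m n : M), I x -> b x (r *: m + n) = r *: b x m + b x n).

(* The element  sum_i x_i (x) m_i  of the tensor product I (x)_R M (with all
   x_i in I) is zero: by the universal property of I (x)_R M, this means it is
   killed by every R-bilinear map out of I x M. *)
Definition tensor_zero (I : R -> Prop) (M : lmodType R) (s : seq (R * M)) : Prop :=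
  forall (P : lmodType R) (b : R -> M -> P), bilin_on I b ->
    \sum_(p <- s) b p.1 p.2 = 0.

(* The ideal I is a flat R-module: I (x)_R - preserves injective maps. *)
Definition flat_ideal (I : R -> Prop) : Prop :=
  forall (M N : lmodType R) (u : M -> N), is_linear_map u -> injective u ->
  forall s : seq (R * M), (forall p, p \in s -> I p.1) ->
    tensor_zero I [seq (p.1, u p.2) | p <- s] -> tensor_zero I s.

Definition pp_ring : Prop := forall f : R, projective_ideal (principal_ideal f).

Definition pf_ring : Prop := forall f : R, flat_ideal (principal_ideal f).

Definition multiplicative (S : R -> Prop) : Prop :=
  S 1 /\ (forall s t, S s -> S t -> S (s * t)).

Definition nonzerodiv (f : R) : Prop := forall g : R, f * g = 0 -> g = 0.

(* Equality of fractions a/s = b/t in S^{-1}R (s, t in S). *)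
Definition frac_eq (S : R -> Prop) (a s b t : R) : Prop :=
  exists u : R, S u /\ u * (a * t - b * s) = 0.

(* S^{-1}R is absolutely flat, i.e. von Neumann regular:
   every x in S^{-1}R has y with x^2 y = x. *)
Definition loc_absolutely_flat (S : R -> Prop) : Prop :=
  forall a s : R, S s ->
    exists b t : R, S t /\ frac_eq S (a * a * b) (s * s * t) a s.

Definition lifts_idempotents (S : R -> Prop) : Prop :=
  forall a s : R, S s -> frac_eq S (a * a) (s * s) a s ->
    exists e : R, e * e = e /\ frac_eq S e 1 a s.

End Defs.

(* Main.v *)
Require Import Defs.
From HB Require Import structures.
From mathcomp Require Import all_boot all_order all_algebra ring.
From Stdlib Require Import ClassicalEpsilon FunctionalExtensionality PropExtensionality.
Set Implicit Arguments. Unset Strict Implicit. Unset Printing Implicit Defensive.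
Import GRing.Theory.
Local Open Scope ring_scope.

Definition JJ (R : comPzRingType) (f g : R) (x : R) : Prop :=
  exists a c : R, x = a + c /\ f * a = 0 /\ g * c = 0.

Lemma JJ0 (R : comPzRingType) (f g : R) : JJ f g 0.
Proof. exists 0, 0; split; first by rewrite addr0. by rewrite !mulr0. Qed.

Lemma JJD (R : comPzRingType) (f g x y : R) : JJ f g x -> JJ f g y -> JJ f g (x + y).
Proof.
move=> [a [c [-> [ha hc]]]] [a' [c' [-> [ha' hc']]]].
exists (a + a'), (c + c'); split; first by ring.
by rewrite !mulrDr ha hc ha' hc' !addr0.
Qed.

Lemma JJN (R : comPzRingType) (f g x : R) : JJ f g x -> JJ f g (- x).
Proof.
move=> [a [c [-> [ha hc]]]]; exists (- a), (- c); split; first by ring.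
by rewrite !mulrN ha hc !oppr0.
Qed.

Lemma JJM (R : comPzRingType) (f g r x : R) : JJ f g x -> JJ f g (r * x).
Proof.
move=> [a [c [-> [ha hc]]]]; exists (r * a), (r * c); split; first by ring.
by rewrite !mulrA ![_ * r]mulrC -!mulrA ha hc !mulr0.
Qed.

Lemma JJf (R : comPzRingType) (f g a : R) : f * a = 0 -> JJ f g a.
Proof. move=> h; exists a, 0; split; first by rewrite addr0. by rewrite mulr0. Qed.

Lemma JJg (R : comPzRingType) (f g c : R) : g * c = 0 -> JJ f g c.
Proof. move=> h; exists 0, c; split; first by rewrite add0r. by rewrite mulr0. Qed.

Lemma JJeq (R : comPzRingType) (f g x y : R) : x = y -> JJ f g x -> JJ f g y.
Proof. by move=> ->. Qed.

Definition canon (R : comPzRingType) (f g : R) (x : R) : R :=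
  epsilon (inhabits (0:R)) (fun y => JJ f g (x - y)).

Lemma canon_spec (R : comPzRingType) (f g x : R) : JJ f g (canon f g x - x).
Proof.
have h : JJ f g (x - canon f g x).
  apply: (epsilon_spec (inhabits (0:R)) (fun y => JJ f g (x - y))).
  by exists x; rewrite subrr; apply: JJ0.
by apply: JJeq (JJN h); ring.
Qed.

Lemma canon_eq (R : comPzRingType) (f g x y : R) : JJ f g (x - y) -> canon f g x = canon f g y.
Proof.
move=> h; rewrite /canon.
have -> : (fun z => JJ f g (x - z)) = (fun z => JJ f g (y - z)) => //.
apply: functional_extensionality => z; apply: propositional_extensionality; split => hz.
  by apply: JJeq (JJD (JJN h) hz); ring.
by apply: JJeq (JJD h hz); ring.
Qed.

Lemma canon_idem (R : comPzRingType) (f g x : R) : canon f g (canon f g x) == canon f g x.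
Proof. by apply/eqP/canon_eq/canon_spec. Qed.

Definition quot (R : comPzRingType) (f g : R) := {x : R | canon f g x == x}.
HB.instance Definition _ (R : comPzRingType) (f g : R) := Choice.on (quot f g).

Definition pi (R : comPzRingType) (f g : R) (x : R) : quot f g :=
  exist (fun y => canon f g y == y) (canon f g x) (canon_idem f g x).

Lemma piK (R : comPzRingType) (f g : R) (q : quot f g) : pi f g (sval q) = q.
Proof. by apply: val_inj => /=; apply/eqP; case: q. Qed.

Lemma pi_eq (R : comPzRingType) (f g x y : R) : JJ f g (x - y) -> pi f g x = pi f g y.
Proof. by move=> h; apply: val_inj => /=; apply: canon_eq. Qed.

Lemma pi_eqP (R : comPzRingType) (f g x y : R) : pi f g x = pi f g y -> JJ f g (x - y).
Proof.
move=> /(congr1 sval) /= h.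
apply: JJeq (JJD (JJN (canon_spec f g x)) (canon_spec f g y)).
by rewrite h; ring.
Qed.

Lemma pi_val (R : comPzRingType) (f g x : R) : sval (pi f g x) = canon f g x.
Proof. by []. Qed.


Definition zeroq (R : comPzRingType) (f g : R) : quot f g := pi f g 0.
Definition addq (R : comPzRingType) (f g : R) (a b : quot f g) : quot f g :=
  pi f g (sval a + sval b).
Definition oppq (R : comPzRingType) (f g : R) (a : quot f g) : quot f g :=
  pi f g (- sval a).
Definition scaleq (R : comPzRingType) (f g : R) (r : R) (a : quot f g) : quot f g :=
  pi f g (r * sval a).

Lemma addq_pi (R : comPzRingType) (f g x y : R) : addq (pi f g x) (pi f g y) = pi f g (x + y).
Proof.
apply: pi_eq; rewrite !pi_val.
by apply: JJeq (JJD (canon_spec f g x) (canon_spec f g y)); ring.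
Qed.

Lemma oppq_pi (R : comPzRingType) (f g x : R) : oppq (pi f g x) = pi f g (- x).
Proof.
apply: pi_eq; rewrite !pi_val.
by apply: JJeq (JJN (canon_spec f g x)); ring.
Qed.

Lemma scaleq_pi (R : comPzRingType) (f g r x : R) : scaleq r (pi f g x) = pi f g (r * x).
Proof.
apply: pi_eq; rewrite !pi_val.
by apply: JJeq (JJM r (canon_spec f g x)); ring.
Qed.

Ltac qelim a := rewrite -(piK a); move: (sval a) => {}a.

Lemma addqA (R : comPzRingType) (f g : R) : associative (@addq R f g).
Proof. by move=> a b c; qelim a; qelim b; qelim c; rewrite !addq_pi addrA. Qed.
Lemma addqC (R : comPzRingType) (f g : R) : commutative (@addq R f g).
Proof. by move=> a b; qelim a; qelim b; rewrite !addq_pi addrC. Qed.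
Lemma add0q (R : comPzRingType) (f g : R) : left_id (zeroq f g) (@addq R f g).
Proof. by move=> a; qelim a; rewrite /zeroq !addq_pi add0r. Qed.
Lemma addNq (R : comPzRingType) (f g : R) : left_inverse (zeroq f g) (@oppq R f g) (@addq R f g).
Proof. by move=> a; qelim a; rewrite /zeroq oppq_pi !addq_pi addNr. Qed.

HB.instance Definition _ (R : comPzRingType) (f g : R) :=
  GRing.isZmodule.Build (quot f g) (@addqA R f g) (@addqC R f g) (@add0q R f g) (@addNq R f g).

Lemma addqE (R : comPzRingType) (f g : R) (a b : quot f g) : a + b = addq a b.
Proof. by []. Qed.

Lemma scaleqA (R : comPzRingType) (f g : R) a b (v : quot f g) : scaleq a (scaleq b v) = scaleq (a * b) v.
Proof. by qelim v; rewrite !scaleq_pi mulrA. Qed.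
Lemma scale1q (R : comPzRingType) (f g : R) : left_id 1 (@scaleq R f g).
Proof. by move=> v; qelim v; rewrite !scaleq_pi mul1r. Qed.
Lemma scaleqDr (R : comPzRingType) (f g : R) : right_distributive (@scaleq R f g) +%R.
Proof. move=> r a b; qelim a; qelim b; rewrite !addqE addq_pi !scaleq_pi; symmetry; etransitivity; first exact: addq_pi. by rewrite mulrDr. Qed.
Lemma scaleqDl (R : comPzRingType) (f g : R) (v : quot f g) : {morph (@scaleq R f g)^~ v: a b / a + b}.
Proof. qelim v => a b; rewrite addqE !scaleq_pi; symmetry; etransitivity; first exact: addq_pi. by rewrite mulrDl. Qed.

HB.instance Definition _ (R : comPzRingType) (f g : R) :=
  GRing.Zmodule_isLmodule.Build R (quot f g) (@scaleqA R f g) (@scale1q R f g) (@scaleqDr R f g) (@scaleqDl R f g).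


Lemma piZ (R : comPzRingType) (f g r x : R) : r *: pi f g x = pi f g (r * x).
Proof. exact: scaleq_pi. Qed.
Lemma piD (R : comPzRingType) (f g x y : R) : pi f g x + pi f g y = pi f g (x + y).
Proof. exact: addq_pi. Qed.
Lemma pi0 (R : comPzRingType) (f g : R) : (0 : quot f g) = pi f g 0.
Proof. by []. Qed.

Lemma JJ1 (R : comPzRingType) (f x : R) : JJ 1 f x -> f * x = 0.
Proof. by move=> [a [c [-> [ha hc]]]]; rewrite mul1r in ha; rewrite ha add0r. Qed.

Definition rho (R : comPzRingType) (f x : R) : R :=
  epsilon (inhabits (0:R)) (fun r => x = r * f).

Lemma rho_spec (R : comPzRingType) (f x : R) : principal_ideal f x -> x = rho f x * f.
Proof.
move=> h; exact: (epsilon_spec (inhabits (0:R)) (fun r => x = r * f) h).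
Qed.

Lemma pi_lin (R : comPzRingType) (f x y : R) :
  principal_ideal f x -> principal_ideal f y -> principal_ideal f (x + y).
Proof. by move=> [a ->] [b ->]; exists (a + b); rewrite mulrDl. Qed.
Lemma pi_mul (R : comPzRingType) (f r x : R) :
  principal_ideal f x -> principal_ideal f (r * x).
Proof. by move=> [a ->]; exists (r * a); rewrite mulrA. Qed.
Lemma pi_0 (R : comPzRingType) (f : R) : principal_ideal f 0.
Proof. by exists 0; rewrite mul0r. Qed.
Lemma pi_f (R : comPzRingType) (f : R) : principal_ideal f f.
Proof. by exists 1; rewrite mul1r. Qed.

Lemma rho_lin (R : comPzRingType) (f r x y : R) :
  principal_ideal f x -> principal_ideal f y ->
  f * (rho f (r * x + y) - (r * rho f x + rho f y)) = 0.
Proof.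
move=> hx hy.
have hxy := rho_spec (pi_lin (pi_mul r hx) hy).
have ex := rho_spec hx; have ey := rho_spec hy.
rewrite mulrBr mulrDr [f * rho f (_ + _)]mulrC -hxy.
by rewrite mulrA [f * r]mulrC -mulrA ![f * rho _ _]mulrC -ex -ey subrr.
Qed.

Definition PPp (R : comPzRingType) : Prop :=
  forall f : R, exists e : R, e * e = e /\ e * f = f /\ (forall y, f * y = 0 -> e * y = 0).

Lemma dbl0 (V : zmodType) (x : V) : x = x + x -> x = 0.
Proof. by move=> e; symmetry; apply: (@addrI _ x); rewrite addr0 -e. Qed.

Lemma lin_on0 (R : comPzRingType) (N : lmodType R) (I : R -> Prop) (h : R -> N) :
  I 0 -> lin_on I h -> h 0 = 0.
Proof.
move=> I0 hl; have := hl 1 0 0 I0 I0; rewrite mulr0 addr0 scale1r.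
exact: dbl0.
Qed.

Lemma lin_onZ (R : comPzRingType) (N : lmodType R) (I : R -> Prop) (h : R -> N) r x :
  I 0 -> I x -> lin_on I h -> h (r * x) = r *: h x.
Proof.
move=> I0 Ix hl; have := hl r x 0 Ix I0; rewrite addr0 (lin_on0 I0 hl) addr0 //.
Qed.

Lemma linmap0 (R : comPzRingType) (M N : lmodType R) (g : M -> N) :
  is_linear_map g -> g 0 = 0.
Proof.
move=> hl; have := hl 1 0 0; rewrite scaler0 addr0 scale1r.
exact: dbl0.
Qed.

Lemma linmapZ (R : comPzRingType) (M N : lmodType R) (g : M -> N) r m :
  is_linear_map g -> g (r *: m) = r *: g m.
Proof. by move=> hl; have := hl r m 0; rewrite addr0 (linmap0 hl) addr0. Qed.

Lemma pp_PP (R : comPzRingType) : pp_ring R -> PPp R.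
Proof.
move=> H f.
have glin : is_linear_map (fun r : R^o => pi 1 f r).
  by move=> r x y; rewrite piZ piD.
have gsurj : forall n : quot 1 f, exists m : R^o, pi 1 f m = n.
  by move=> n; exists (sval n); apply: piK.
have hlin : lin_on (principal_ideal f) (fun x => pi 1 f (rho f x)).
  move=> r x y hx hy; rewrite piZ piD; apply: pi_eq; apply: JJg.
  exact: rho_lin.
have [k [kl kh]] := H f _ _ _ glin gsurj _ hlin.
have kf : forall x, principal_ideal f x -> f * k x = x.
  move=> x hx; have := JJ1 (pi_eqP (kh x hx)).
  rewrite mulrBr => /eqP; rewrite subr_eq0 => /eqP ->.
  by rewrite mulrC -rho_spec.
set c := k f.
have cf : c * f = f by rewrite mulrC /c (kf _ (pi_f f)).
have cy : forall y, f * y = 0 -> y * c = 0.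
  move=> y fy; have := lin_onZ y (pi_0 f) (pi_f f) kl.
  by rewrite [y * f]mulrC fy (lin_on0 (pi_0 f) kl) => /esym h; exact: h.
have c3 : c * c * c = c * c.
  have : (c - c * c) * c = 0.
    apply: cy; rewrite mulrBr mulrC cf mulrA [f * c]mulrC cf mulrC cf subrr //.
  by move/eqP; rewrite mulrBl subr_eq0 => /eqP <-.
exists (c * c); split; last split.
- by rewrite mulrA c3 c3.
- by rewrite -mulrA cf cf.
- by move=> y fy; rewrite -mulrA [c * y]mulrC cy // mulr0.
Qed.

Lemma PP_pp (R : comPzRingType) : PPp R -> pp_ring R.
Proof.
move=> H f M N g gl gs h hl.
have [e [ee [ef ey]]] := H f.
have [m gm] := gs (h f).
exists (fun x => (rho f x * e) *: m); split.
  move=> r x y hx hy /=.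
  rewrite scalerA -scalerDl; congr (_ *: m).
  have := ey _ (rho_lin r hx hy); rewrite mulrC mulrBl => /eqP.
  by rewrite subr_eq0 => /eqP ->; rewrite mulrDl mulrA.
move=> x hx /=; rewrite linmapZ // gm.
rewrite {2}(rho_spec hx) (lin_onZ _ (pi_0 f) (pi_f f) hl).
have := lin_onZ e (pi_0 f) (pi_f f) hl; rewrite ef => E.
rewrite -scalerA; congr (_ *: _); exact: (esym E).
Qed.

Lemma nzd1 (R : comPzRingType) : nonzerodiv (1 : R).
Proof. by move=> g; rewrite mul1r. Qed.

Lemma nzd_mult (R : comPzRingType) : Defs.multiplicative (@nonzerodiv R).
Proof.
split; first exact: nzd1.
by move=> s t hs ht g; rewrite -mulrA => /hs /ht.
Qed.

Lemma LAF1 (R : comPzRingType) : loc_absolutely_flat (@nonzerodiv R) ->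
  forall f : R, exists b t, nonzerodiv t /\ f * f * b = f * t.
Proof.
move=> H f; have [b [t [ht [u [hu E]]]]] := H f 1 (@nzd1 R).
exists b, t; split => //; move: (hu _ E) => /eqP.
by rewrite !mulr1 !mul1r subr_eq0 => /eqP.
Qed.

Lemma PP_LAF (R : comPzRingType) : PPp R -> loc_absolutely_flat (@nonzerodiv R).
Proof.
move=> H a s hs; have [e [ee [ea ey]]] := H a.
have E : a * e = a by rewrite mulrC.
exists (s * e), (a + 1 - e); split.
  move=> x hx.
  have ax : a * x = 0.
    have : e * ((a + 1 - e) * x) = 0 by rewrite hx mulr0.
    by rewrite mulrA mulrBr mulrDr ee ea mulr1 addrK.
  have ex := ey _ ax.
  by move: hx; rewrite mulrBl mulrDl ax ex add0r mul1r subr0.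
exists 1; split; first exact: nzd1.
have -> : a * a * (s * e) * s - a * (s * s * (a + 1 - e)) =
          s * s * (a * (a * e) - a * a - a + a * e) by ring.
by rewrite E; ring.
Qed.

Lemma PP_lift (R : comPzRingType) : PPp R ->
  forall S : R -> Prop, Defs.multiplicative S -> lifts_idempotents S.
Proof.
move=> H S [S1 SM] a s hs [u [hu E]].
have [e [ee [eca ey]]] := H (u * s * a).
have h1 : e * (a - s) = 0.
  apply: ey; rewrite -E; ring.
exists e; split => //; exists (u * s); split; first exact: SM.
have es : e * s = e * a by move/eqP: h1; rewrite mulrBr subr_eq0 => /eqP.
have -> : u * s * (e * s - a * 1) = e * s * (u * s) - u * s * a by ring.
rewrite es -eca; ring.
Qed.

Lemma LAF_lift_PP (R : comPzRingType) : loc_absolutely_flat (@nonzerodiv R) ->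
  lifts_idempotents (@nonzerodiv R) -> PPp R.
Proof.
move=> H L f; have [b [t [ht E]]] := LAF1 H f.
have F : frac_eq (@nonzerodiv R) (f * b * (f * b)) (t * t) (f * b) t.
  exists 1; split; first exact: nzd1.
  have -> : 1 * (f * b * (f * b) * t - f * b * (t * t)) = b * t * (f * f * b - f * t) by ring.
  by rewrite E subrr mulr0.
have [e [ee [v [hv E2]]]] := L (f * b) t ht F.
have et : e * t = f * b.
  by move: (hv _ E2) => /eqP; rewrite mulr1 subr_eq0 => /eqP.
exists e; split => //; split.
  apply/eqP; rewrite -subr_eq0; apply/eqP; apply: ht.
  have -> : t * (e * f - f) = (e * t) * f - f * t by ring.
  by rewrite et -E; ring.
move=> y fy; apply: ht.
have -> : t * (e * y) = (e * t) * y by ring.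
by rewrite et mulrC mulrA [y * f]mulrC fy mul0r.
Qed.

Lemma ycanon (R : comPzRingType) (y x : R) : y * canon 1 y x = y * x.
Proof.
have := JJ1 (canon_spec 1 y x); rewrite mulrBr => /eqP.
by rewrite subr_eq0 => /eqP.
Qed.

Lemma bil0l (R : comPzRingType) (I : R -> Prop) (M P : lmodType R) (b : R -> M -> P) m :
  I 0 -> bilin_on I b -> b 0 m = 0.
Proof.
move=> I0 [h1 _]; have := h1 1 0 0 m I0 I0; rewrite mulr0 addr0 scale1r.
exact: dbl0.
Qed.

Lemma bil0r (R : comPzRingType) (I : R -> Prop) (M P : lmodType R) (b : R -> M -> P) x :
  I x -> bilin_on I b -> b x 0 = 0.
Proof.
move=> Ix [_ h2]; have := h2 1 x 0 0 Ix; rewrite scaler0 addr0 scale1r.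
exact: dbl0.
Qed.

Lemma pf_pure (R : comPzRingType) : pf_ring R ->
  forall f y : R, f * y = 0 -> exists h, f * h = 0 /\ y * h = y.
Proof.
move=> H f y fy.
pose u := fun q : quot 1 y => (sval q * y : R^o).
have uE : forall x, u (pi 1 y x) = x * y.
  by move=> x; rewrite /u pi_val mulrC ycanon mulrC.
have ul : is_linear_map u.
  move=> r q q'; qelim q; qelim q'; rewrite piZ piD !uE.
  by rewrite /GRing.scale /=; ring.
have ui : injective u.
  move=> q q'; qelim q; qelim q'; rewrite !uE => E.
  apply: pi_eq; apply: JJg; rewrite mulrBr ![y * _]mulrC E subrr //.
pose s := [:: (f, pi 1 y 1)].
have sI : forall p, p \in s -> principal_ideal f p.1.
  by move=> p; rewrite inE => /eqP -> /=; exact: pi_f.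
have T : tensor_zero (principal_ideal f) [seq (p.1, u p.2) | p <- s].
  move=> P b bl; rewrite /= big_cons big_nil addr0 /= uE mul1r.
  have [h1 h2] := bl.
  have e1 := h2 y f 1 0 (pi_f f).
  rewrite (bil0r (pi_f f) bl) addr0 in e1.
  have e2 := h1 y f 0 1 (pi_f f) (pi_0 f).
  rewrite (bil0l _ (pi_0 f) bl) addr0 mulrC fy (bil0l _ (pi_0 f) bl) in e2.
  rewrite (_ : y = y *: (1 : R^o)); last by rewrite /GRing.scale /= mulr1.
  by rewrite e1 -e2.
have T2 := H f _ _ u ul ui s sI T (quot f y) (fun x q => pi f y (rho f x * sval q)).
have B : bilin_on (principal_ideal f) (fun x (q : quot 1 y) => pi f y (rho f x * sval q) : quot f y).
  split.
    move=> r x z q hx hz; rewrite piZ piD; apply: pi_eq; apply: JJf.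
    have -> : f * (rho f (r * x + z) * sval q - (r * (rho f x * sval q) + rho f z * sval q))
       = f * (rho f (r * x + z) - (r * rho f x + rho f z)) * sval q by ring.
    by rewrite rho_lin // mul0r.
  move=> r x q q' hx; qelim q; qelim q'; rewrite piZ piD /= piZ piD.
  apply: pi_eq; apply: JJg.
  have -> : y * (rho f x * canon 1 y (r * q + q') - (r * (rho f x * canon 1 y q) + rho f x * canon 1 y q'))
     = rho f x * (y * canon 1 y (r * q + q') - r * (y * canon 1 y q) - y * canon 1 y q') by ring.
  rewrite !ycanon; ring.
move: (T2 B); rewrite /= big_cons big_nil addr0 /= pi0 => /pi_eqP.
move=> [a [c [E [fa yc]]]].
set P := rho f f in E; set Q := canon 1 y 1 in E.
have fP : f * P = f by rewrite mulrC -rho_spec //; exact: pi_f.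
have yQ : y * Q = y by rewrite /Q ycanon mulr1.
exists (a - (P - 1) - (P - 1) * (Q - 1)); split.
  have -> : f * (a - (P - 1) - (P - 1) * (Q - 1)) = f * a - (f * P - f) * Q by ring.
  by rewrite fa fP subrr mul0r subrr.
have Ea : a = P * Q - c by rewrite -(subr0 (P * Q)) E addrK.
rewrite Ea.
have -> : y * (P * Q - c - (P - 1) - (P - 1) * (Q - 1)) = y * Q - y * c by ring.
by rewrite yQ yc subr0.
Qed.

Lemma pf_LAF_PP (R : comPzRingType) : pf_ring R -> loc_absolutely_flat (@nonzerodiv R) -> PPp R.
Proof.
move=> H L f; have [b [t [ht E]]] := LAF1 L f.
have fy0 : f * (t - f * b) = 0 by rewrite mulrBr mulrA E subrr.
have [h [fh yh]] := pf_pure H fy0.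
have th : t * h = t - f * b.
  have -> : t * h = (t - f * b) * h + b * (f * h) by ring.
  by rewrite yh fh mulr0 addr0.
have hh : h * h = h.
  apply/eqP; rewrite eq_sym -subr_eq0; apply/eqP; apply: ht.
  have -> : t * (h - h * h) = t * h - (t * h) * h by ring.
  by rewrite th yh subrr.
exists (1 - h); split.
  by rewrite mulrBr mulr1 mulrBl mul1r hh subrr subr0.
split; first by rewrite mulrBl mul1r mulrC fh subr0.
move=> x fx; apply: ht.
have -> : t * ((1 - h) * x) = (t - t * h) * x by ring.
by rewrite th opprB addrC subrK mulrC mulrA [x * f]mulrC fx mul0r.
Qed.

Lemma linmap_sum (R : comPzRingType) (M N : lmodType R) (u : M -> N) (T : Type)
  (s : seq T) (F : T -> M) :
  is_linear_map u -> u (\sum_(p <- s) F p) = \sum_(p <- s) u (F p).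
Proof.
move=> ul; elim: s => [|p s IH]; first by rewrite !big_nil linmap0.
by rewrite !big_cons -IH; have := ul 1 (F p) (\sum_(q <- s) F q); rewrite !scale1r.
Qed.

Lemma PP_pf (R : comPzRingType) : PPp R -> pf_ring R.
Proof.
move=> H f M N u ul ui s sI T P b bl.
have [e [ee [ef ey]]] := H f.
have [h1 h2] := bl.
have S1 : forall s' : seq (R * M), (forall p, p \in s' -> principal_ideal f p.1) ->
    \sum_(p <- s') b p.1 p.2 = b f (\sum_(p <- s') rho f p.1 *: p.2).
  elim=> [|p s' IH] hs; first by rewrite !big_nil (bil0r (pi_f f) bl).
  have hs' : forall q, q \in s' -> principal_ideal f q.1.
    by move=> q hq; apply: hs; rewrite inE hq orbT.
  have hp : principal_ideal f p.1 by apply: hs; rewrite inE eqxx.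
  rewrite !big_cons h2; last exact: pi_f.
  congr (_ + _); last exact: IH hs'.
  rewrite {1}(rho_spec hp).
  have := h1 (rho f p.1) f 0 p.2 (pi_f f) (pi_0 f).
  by rewrite addr0 (bil0l _ (pi_0 f) bl) addr0.
rewrite S1 //.
set m := \sum_(p <- s) rho f p.1 *: p.2.
have B : bilin_on (principal_ideal f) (fun x (n : N) => (rho f x * e) *: n).
  split.
    move=> r x z n hx hz; rewrite scalerA -scalerDl; congr (_ *: n).
    have := ey _ (rho_lin r hx hz); rewrite mulrC mulrBl => /eqP.
    by rewrite subr_eq0 => /eqP ->; rewrite mulrDl mulrA.
  move=> r x n n' hx; rewrite scalerDr !scalerA; congr (_ *: _ + _).
  by rewrite mulrC.
have T2 := T N _ B.
rewrite big_map /= in T2.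
have em : e *: m = 0.
  apply: ui; rewrite (linmap0 ul) /m scaler_sumr linmap_sum //.
  rewrite -[RHS]T2; apply: eq_bigr => p _.
  by rewrite scalerA linmapZ // mulrC.
have := h1 e f 0 m (pi_f f) (pi_0 f).
rewrite addr0 ef (bil0l _ (pi_0 f) bl) addr0 => ->.
have := h2 e f m 0 (pi_f f).
by rewrite addr0 (bil0r (pi_f f) bl) addr0 em (bil0r (pi_f f) bl) => <-.
Qed.

Theorem theorem2p1 (R : comPzRingType) :
  (pp_ring R <-> pf_ring R /\ loc_absolutely_flat (@nonzerodiv R)) /\
  (pp_ring R <-> loc_absolutely_flat (@nonzerodiv R) /\
      (forall S : R -> Prop, Defs.multiplicative S -> lifts_idempotents S)) /\
  (pp_ring R <-> loc_absolutely_flat (@nonzerodiv R) /\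
      lifts_idempotents (@nonzerodiv R)).
Proof.
have A1 : pp_ring R -> PPp R := @pp_PP R.
have A2 : PPp R -> pp_ring R := @PP_pp R.
split; last split.
- split; first by move=> /A1 h; split; [exact: PP_pf | exact: PP_LAF].
  by move=> [h1 h2]; apply: A2; exact: pf_LAF_PP.
- split; first by move=> /A1 h; split; [exact: PP_LAF | exact: PP_lift].
  by move=> [h1 h2]; apply: A2; apply: LAF_lift_PP => //; apply: h2; exact: nzd_mult.
- split; first by move=> /A1 h; split; [exact: PP_LAF | apply: PP_lift => //; exact: nzd_mult].
  by move=> [h1 h2]; apply: A2; exact: LAF_lift_PP.
Qed.
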